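(* Let $X=\nu_{d_1,\dots,d_k}(\mathbb{P}^{n_1}\times\cdots\times\mathbb{P}^{n_k})\subset\mathbb{P}^N$ be the Segre-Veronese variety and $p\in\mathbb{P}^N$. Suppose there exists a curvilinear zero-dimensional scheme $Z\subset\mathbb{P}^{n_1}\times\cdots\times\mathbb{P}^{n_k}$ of degree $c$ with $\alpha$ connected components $Z_1,\dots,Z_\alpha$ such that $p\in\langle\nu_{d_1,\dots,d_k}(Z)\rangle$ and each $\nu_{d_1,\dots,d_k}(Z_j)$ is linearly independent (i.e. $\dim\langle\nu_{d_1,\dots,d_k}(Z_j)\rangle=\deg(Z_j)-1$). Then $$r_X(p)\le 2\alpha+c\Big(-1+\sum_{i=1}^k d_i\Big).$$
   Context: Work over an algebraically closed field. $\nu_{d_1,\dots,d_k}:\mathbb{P}^{n_1}\times\cdots\times\mathbb{P}^{n_k}\to\mathbb{P}^N$, $N=\prod_i\binom{d_i+n_i}{n_i}-1$, is the Segre-Veronese embedding by $|\mathcal{O}(d_1,\dots,d_k)|$ and $X$ its image. A zero-dimensional scheme is curvilinear if each of its connected components has Zariski tangent space of dimension $\le 1$. $\langle Y\rangle$ is the linear span. The $X$-rank $r_X(p)$ is the minimal $s$ such that $p$ lies in the span of $s$ points of $X$. *)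

(* Defs.v *)
From HB Require Import structures.
From mathcomp Require Import all_boot all_order all_algebra.
Set Implicit Arguments. Unset Strict Implicit. Unset Printing Implicit Defensive.
Import Order.TTheory GRing.Theory Num.Theory.
Local Open Scope ring_scope.

Section SV.
Variable F : fieldType.
Variables (k : nat) (n d : 'I_k -> nat).

(* Degree-(d i) monomials in the n i + 1 homogeneous coordinates of P^{n i},
   encoded as nondecreasing (d i)-tuples of variable indices (a multiset). *)
Definition Mon (i : 'I_k) : Type :=
  {t : (d i).-tuple 'I_(n i).+1 | sorted leq [seq val x | x <- t]}.

(* Coordinates of the ambient P^N of the Segre-Veronese embedding:
   multihomogeneous monomials of multidegree (d_1,...,d_k). *)
Definition SVidx : Type := {dffun forall i : 'I_k, Mon i}.

(* Affine-cone representative of a point of P^{n_1} x ... x P^{n_k}. *)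
Definition ppoint : Type := forall i : 'I_k, 'I_(n i).+1 -> F.

Definition ppoint_ok (x : ppoint) : Prop := forall i, exists t, x i t != 0.

Definition sv (x : ppoint) : SVidx -> F :=
  fun a => \prod_(i < k) \prod_(t <- val (a i)) x i t.

Definition in_span (s : nat) (v : nat -> SVidx -> F) (p : SVidx -> F) : Prop :=
  exists c : nat -> F, forall a, p a = \sum_(l < s) c l * v l a.

Definition lin_indep (s : nat) (v : nat -> SVidx -> F) : Prop :=
  forall c : nat -> F, (forall a, \sum_(l < s) c l * v l a = 0) ->
    forall l, (l < s)%N -> c l = 0.

Definition Xrank_le (p : SVidx -> F) (r : nat) : Prop :=
  exists s : nat, (s <= r)%N /\
    exists x : nat -> ppoint,
      (forall l, (l < s)%N -> ppoint_ok (x l)) /\ in_span s (fun l => sv (x l)) p.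

(* A polynomial germ of a curve in the affine cones:
   gamma i t = t-th homogeneous coordinate in the i-th factor, as a polynomial
   in the parameter u.  A connected curvilinear scheme of degree m is the image
   of Spec F[u]/(u^m) under such a germ, embedded when m >= 2. *)
Definition germ : Type := forall i : 'I_k, 'I_(n i).+1 -> {poly F}.

Definition germ_pt (g : germ) : ppoint := fun (i : 'I_k) t => (g i t)`_0.
Arguments germ_pt g i t : clear implicits.

Definition proportional (i : 'I_k) (x y : 'I_(n i).+1 -> F) : Prop :=
  exists c : F, forall t, x t = c * y t.

(* g mod u^m defines a closed embedding of Spec F[u]/(u^m): support point is a
   point of the product, and (if m >= 2) the tangent vector is nonzero, i.e.
   in some factor the first-order term is not proportional to the base point. *)
Definition curvilinear_component (m : nat) (g : germ) : Prop :=
  [/\ (0 < m)%N, ppoint_ok (germ_pt g) &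
      (1 < m)%N -> exists i, ~ @proportional i (fun t => (g i t)`_1) (fun t => (g i t)`_0)].

(* Taylor coefficients of nu o g: the l-th one for l < m span <nu(Z)>
   of the component Z = image of Spec F[u]/(u^m). *)
Definition sv_coef (g : germ) (l : nat) : SVidx -> F :=
  fun a => (\prod_(i < k) \prod_(t <- val (a i)) g i t)`_l.

(* Z = disjoint union of alpha connected curvilinear components Z_j
   (degree m j, germ g j), with distinct support points. *)
Definition curvilinear_scheme (alpha : nat) (m : 'I_alpha -> nat)
  (g : 'I_alpha -> germ) : Prop :=
  (forall j, curvilinear_component (m j) (g j)) /\
  (forall j1 j2, j1 != j2 -> exists i,
      ~ @proportional i (germ_pt (g j1) i) (germ_pt (g j2) i)).

Definition in_span_scheme (alpha : nat) (m : 'I_alpha -> nat)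
  (g : 'I_alpha -> germ) (p : SVidx -> F) : Prop :=
  exists c : 'I_alpha -> nat -> F,
    forall a, p a = \sum_(j < alpha) \sum_(l < m j) c j l * sv_coef (g j) l a.

End SV.

(* Main.v *)
Require Import Defs.
From HB Require Import structures.
From mathcomp Require Import all_boot all_order all_algebra all_field.
From mathcomp Require Import zify ring lra.
From Stdlib Require Import FunctionalExtensionality.
Set Implicit Arguments. Unset Strict Implicit. Unset Printing Implicit Defensive.
Import Order.TTheory GRing.Theory Num.Theory.
Local Open Scope ring_scope.

Section Rank.
Variable F : fieldType.
Variables (k : nat) (n d : 'I_k -> nat).

Lemma Xrank_le0 (p : SVidx n d -> F) : (forall a, p a = 0) -> Xrank_le p 0.
Proof.
move=> hp; exists 0%N; split=> //; exists (fun _ => fun i _ => 0); split=> //.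
by exists (fun _ => 0) => a; rewrite big_ord0 hp.
Qed.

Lemma Xrank_le_mono (p : SVidx n d -> F) r r' : (r <= r')%N -> Xrank_le p r -> Xrank_le p r'.
Proof. by move=> hr [s [hs H]]; exists s; split=> //; apply: leq_trans hr. Qed.

Lemma Xrank_le_add (p q : SVidx n d -> F) r1 r2 : Xrank_le p r1 -> Xrank_le q r2 ->
  Xrank_le (fun a => p a + q a) (r1 + r2).
Proof.
move=> [s1 [hs1 [x1 [ok1 [c1 e1]]]]] [s2 [hs2 [x2 [ok2 [c2 e2]]]]].
exists (s1 + s2)%N; split; first exact: leq_add.
exists (fun l => if (l < s1)%N then x1 l else x2 (l - s1)%N); split.
  move=> l hl; case: ifP => hl1; first exact: ok1.
  apply: ok2; rewrite ltn_subLR //; rewrite leqNgt hl1 //.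
exists (fun l => if (l < s1)%N then c1 l else c2 (l - s1)%N) => a.
rewrite big_split_ord /= e1 e2; congr (_ + _).
  by apply: eq_bigr => i _; rewrite ltn_ord.
apply: eq_bigr => i _; rewrite ltnNge leq_addr /=.
by rewrite addKn.
Qed.

Lemma Xrank_le_sum (I : Type) (r : seq I) (q : I -> SVidx n d -> F) (b : I -> nat) :
  (forall j, Xrank_le (q j) (b j)) ->
  Xrank_le (fun a => \sum_(j <- r) q j a) (\sum_(j <- r) b j)%N.
Proof.
move=> H; elim: r => [|j r IH].
  rewrite big_nil; apply: Xrank_le0 => a; by rewrite big_nil.
have := Xrank_le_add (H j) IH.
rewrite big_cons; congr Xrank_le; apply: functional_extensionality => a; by rewrite big_cons.
Qed.

End Rank.

Section PolyTools.
Variable R : fieldType.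

Lemma size_prod_bound (I : Type) (r : seq I) (P : pred I) (Fp : I -> {poly R}) (w : I -> nat) (e : nat) :
  (forall x, P x -> (size (Fp x) <= (w x * e).+1)%N) ->
  (size (\prod_(x <- r | P x) Fp x)%R <= ((\sum_(x <- r | P x) w x) * e).+1)%N.
Proof.
move=> H; elim: r => [|x r IH]; first by rewrite !big_nil size_poly1.
rewrite !big_cons; case: ifP => Px //.
apply: leq_trans (size_polyMleq _ _) _.
have := H x Px; move: IH; set a := size _; set b := size _ => h1 h2.
rewrite mulnDl; move: h1 h2; generalize (\sum_(j <- r | P j) w j) => S h1 h2; lia.
Qed.

Definition congm (m : nat) (p q : {poly R}) := forall l, (l < m)%N -> p`_l = q`_l.

Lemma congmM m p1 p2 q1 q2 : congm m p1 q1 -> congm m p2 q2 -> congm m (p1 * p2) (q1 * q2).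
Proof.
move=> h1 h2 l hl; rewrite !coefM; apply: eq_bigr => j _.
have hj : (j <= l)%N by rewrite -ltnS.
rewrite h1 ?h2 //; [apply: leq_ltn_trans (leq_subr _ _) hl | apply: leq_ltn_trans hj hl].
Qed.

Lemma congm_prod (I : Type) (r : seq I) (Fp Gp : I -> {poly R}) m :
  (forall x, congm m (Fp x) (Gp x)) -> congm m (\prod_(x <- r) Fp x) (\prod_(x <- r) Gp x).
Proof.
move=> H; elim: r => [|x r IH]; first by rewrite !big_nil.
by rewrite !big_cons; apply: congmM.
Qed.

Definition lag (rs : seq R) (s : nat) : {poly R} :=
  \prod_(j < size rs | (j : nat) != s) (('X - (rs`_j)%:P) * ((rs`_s - rs`_j)^-1)%:P).

Lemma size_lag rs (s : 'I_(size rs)) : (size (lag rs s) <= size rs)%N.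
Proof.
rewrite /lag.
apply: leq_trans (size_prod_bound (w := fun _ => 1%N) (e := 1%N) _ _) _.
  move=> j _; apply: leq_trans (size_polyMleq _ _) _.
  rewrite size_XsubC; apply: leq_trans (_ : (2 + 1).-1 <= 2)%N => //.
  by rewrite -!subn1 leq_sub2r // leq_add2l size_polyC leq_b1.
rewrite muln1 sum1_card.
have -> : #|[pred j : 'I_(size rs) | (j : nat) != s]| = #|predC1 s|.
  by apply: eq_card => j /=; rewrite inE.
by rewrite cardC1 card_ord prednK // (leq_ltn_trans _ (ltn_ord s)).
Qed.

Lemma lag_eval rs (s j : 'I_(size rs)) : uniq rs ->
  (lag rs s).[rs`_j] = (j == s)%:R.
Proof.
move=> hu; rewrite /lag horner_prod.
have [<-|hjs] := eqVneq j s.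
  rewrite ?eqxx; apply: big1 => i hi; rewrite hornerM hornerXsubC hornerC mulfV //.
  by rewrite subr_eq0 nth_uniq // eq_sym.
have hjs' : (j : nat) != s by apply: contra hjs => /eqP /val_inj ->.
rewrite (bigD1 j hjs') /=.
by rewrite hornerM hornerXsubC subrr !mul0r.
Qed.

Lemma lagrange (rs : seq R) (p : {poly R}) : uniq rs -> (size p <= size rs)%N ->
  p = \sum_(s < size rs) p.[rs`_s] *: lag rs s.
Proof.
move=> hu hs; apply/eqP; rewrite -subr_eq0; apply/eqP.
apply: (roots_geq_poly_eq0 (rs := rs)) => //; last first.
  apply: leq_trans (size_polyD _ _) _; rewrite geq_max hs size_polyN.
  apply: leq_trans (size_sum _ _ _) _.
  apply/bigmax_leqP => s _; apply: leq_trans (size_scale_leq _ _) _.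
  exact: size_lag.
apply/allP => x hx; rewrite /root hornerD hornerN horner_sum.
have hj : (index x rs < size rs)%N by rewrite index_mem.
have -> : x = rs`_(Ordinal hj) by rewrite /= nth_index.
rewrite (eq_bigr (fun s : 'I_(size rs) => p.[rs`_s] * (s == Ordinal hj)%:R)); last first.
  by move=> s _; rewrite hornerZ lag_eval // eq_sym.
rewrite (bigD1 (Ordinal hj)) //= eqxx mulr1 big1 ?addr0 ?subrr //.
by move=> s hs'; rewrite (negPf hs') mulr0.
Qed.

End PolyTools.

Section Closed.
Variable F : closedFieldType.

Lemma pick_avoid (S : seq F) : exists b, b != 0 /\ b \notin S.
Proof.
have hnz : 'X * \prod_(s <- S) ('X - s%:P) != 0 :> {poly F}.
  by rewrite mulf_neq0 ?polyX_eq0 // monic_neq0 // monic_prod_XsubC.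
have [x hx] := closed_nonrootP _ hnz; exists x.
move: hx; rewrite rootM root_prod_XsubC rootX negb_or => /andP [h1 h2]; by split.
Qed.

Lemma roots_list (p : {poly F}) : p != 0 -> exists rs : seq F, forall x, root p x = (x \in rs).
Proof.
move=> hp; have [rs hrs] := closed_field_poly_normal p; exists rs => x.
by rewrite {1}hrs rootZ ?lead_coef_eq0 // root_prod_XsubC.
Qed.

Definition Lf (m : nat) (c : nat -> F) (f : {poly F}) := \sum_(l < m) c l * f`_l.

Lemma LfD m c f g : Lf m c (f + g) = Lf m c f + Lf m c g.
Proof. by rewrite /Lf -big_split; apply: eq_bigr => l _; rewrite coefD mulrDr. Qed.

Lemma LfZ m c a f : Lf m c (a *: f) = a * Lf m c f.
Proof. by rewrite /Lf mulr_sumr; apply: eq_bigr => l _; rewrite coefZ mulrCA. Qed.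

Lemma Lf_sum m c (I : Type) (r : seq I) (Fp : I -> {poly F}) :
  Lf m c (\sum_(i <- r) Fp i) = \sum_(i <- r) Lf m c (Fp i).
Proof.
elim: r => [|x r IH]; first by rewrite !big_nil /Lf big1 // => l _; rewrite coef0 mulr0.
by rewrite !big_cons LfD IH.
Qed.

Lemma core_poly (m : nat) (c : nat -> F) (N M : nat) (Gam : {poly F}) :
  (0 < m)%N -> c m.-1 != 0 -> M%:R != 0 :> F -> (m <= M)%N -> (N.+1 < M + m)%N ->
  Gam != 0 ->
  exists rs : seq F, [/\ size rs = M, uniq rs, (forall z, z \in rs -> Gam.[z] != 0) &
    forall f : {poly F}, (size f <= N.+1)%N ->
      Lf m c f = \sum_(s < M) f.[rs`_s] * Lf m c (lag rs s)].
Proof.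
move=> m0 cm hM hmM hN hG.
pose C : {poly F} := \poly_(j < m) c (m.-1 - j)%N.
have LC : forall f, Lf m c f = (C * f)`_m.-1.
  move=> f; rewrite coefM prednK //.
  rewrite /Lf (reindex_inj rev_ord_inj) /=; apply: eq_bigr => j _.
  rewrite coef_poly ltn_ord; congr (c _ * f`_ _); lia.
have hC0 : C.[0] != 0.
  by rewrite horner_coef0 coef_poly m0 subn0.
have cop : coprimep C 'X^m.
  apply: coprimep_expr.
  have -> : 'X = 'X - (0 : F)%:P :> {poly F} by rewrite subr0.
  by rewrite coprimep_XsubC /root.
have [[u1 u2] /= hu] := Bezout_eq1_coprimepP _ _ cop.
pose A := u1 %% 'X^m.
pose K := - (u2 + C * (u1 %/ 'X^m)).
have hCA : C * A = 1 + 'X^m * K.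
  have e := divp_eq u1 ('X^m); rewrite /A /K.
  apply/eqP; rewrite -subr_eq0; apply/eqP.
  move: hu; rewrite {1}e => hu.
  rewrite -{1}hu; ring.
have hXm0 : ((@GRing.exp {poly F} (polyX F) m)).[0] = 0 by rewrite hornerXn expr0n; case: eqP => // e; move: m0; rewrite e.
have hA0 : A.[0] != 0.
  have := congr1 (fun p => p.[0]) hCA; rewrite /= hornerM hornerD hornerM hXm0 mul0r addr0 hornerC.
  by move=> e; apply/eqP => e0; move: e; rewrite e0 mulr0 => /eqP; rewrite eq_sym oner_eq0.
have hsA : (size A <= m)%N.
  by rewrite -ltnS -(size_polyXn F m) ltn_modp -size_poly_eq0 size_polyXn.
pose G := 'X * A^`() - M%:R *: A.
have hG0 : G != 0.
  apply/eqP => e; have := congr1 (fun p => p.[0]) e.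
  rewrite /G hornerD hornerN hornerM hornerX mul0r sub0r hornerZ horner0 => /eqP.
  by rewrite oppr_eq0 mulf_eq0 (negPf hM) (negPf hA0).
have [rG hrG] := roots_list hG0.
have [rGam hrGam] := roots_list hG.
pose S := [seq A.[z] / z ^+ M | z <- rG ++ rGam].
have [b [hb0 hbS]] := pick_avoid S.
pose h := A - b *: 'X^M.
have hsh : size h = M.+1.
  rewrite /h addrC size_polyDl size_polyN size_scale // size_polyXn //.
  by rewrite ltnS (leq_trans hsA hmM).
have hh0 : h != 0 by rewrite -size_poly_eq0 hsh.
have hhz : forall z, z \in rG ++ rGam -> h.[z] != 0.
  move=> z hz; have [->|z0] := eqVneq z 0.
    rewrite /h hornerD hornerN hornerZ hornerXn expr0n.
    have -> : (M == 0%N) = false by apply/negP => /eqP e; move: hmM; rewrite e; lia.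
    by rewrite mulr0 subr0.
  apply/eqP => e; move: hbS; rewrite /S; case/negP; apply/mapP; exists z => //.
  move: e; rewrite /h hornerD hornerN hornerZ hornerXn => /eqP; rewrite subr_eq0 => /eqP ->.
  by rewrite mulfK // expf_neq0.
have [rs hrs] := closed_field_poly_normal h.
have hlead : lead_coef h != 0 by rewrite lead_coef_eq0.
have hszrs : size rs = M.
  have := hsh; rewrite {1}hrs size_scale // size_prod_XsubC; by case.
have hroot : forall x, root h x = (x \in rs).
  by move=> x; rewrite {1}hrs rootZ // root_prod_XsubC.
have hu_rs : uniq rs.
  rewrite -separable_prod_XsubC.
  have -> : \prod_(z <- rs) ('X - z%:P) = (lead_coef h)^-1 *: h.
    by rewrite {2}hrs scalerA mulVf // scale1r.
  rewrite unlock derivZ coprimepZl ?invr_eq0 // coprimepZr ?invr_eq0 //.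
  apply: Pdiv.ClosedField.root_coprimep => x hx; apply/negP => /eqP hd.
  have hGx : root G x.
    move: hx; rewrite /root /G => /eqP hx.
    have hh' : h^`() = A^`() - b *: ('X^(M.-1) *+ M).
      by rewrite /h derivB derivZ derivXn.
    move: hd; rewrite hh' hornerD hornerN hornerZ hornerMn hornerXn => hd.
    move: hx; rewrite /h hornerD hornerN hornerZ hornerXn => hx.
    rewrite hornerD hornerN hornerM hornerX hornerZ.
    have eM : x ^+ M = x * x ^+ M.-1 by rewrite -exprS prednK //; lia.
    apply/eqP; move: hd hx; rewrite eM => hd hx.
    have e1 : A^`().[x] = b * (x ^+ M.-1 *+ M) by apply/eqP; rewrite -subr_eq0 hd.
    have e2 : A.[x] = b * (x * x ^+ M.-1) by apply/eqP; rewrite -subr_eq0 hx.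
    rewrite e1 e2 -mulr_natl -[in X in _ - X]mulr_natl; ring.
  move: (hhz x); rewrite mem_cat -hrG hGx /= => /(_ isT).
  by move: hx; rewrite /root => ->.
exists rs; split => //.
  move=> z hz; apply/negP => /eqP e.
  have : root Gam z by rewrite /root e.
  rewrite hrGam => hz'; move: (hhz z); rewrite mem_cat hz' orbT => /(_ isT).
  by rewrite -/(root h z) hroot hz.
move=> f hf.
rewrite {1}(divp_eq f h) LfD.
have -> : Lf m c (f %/ h * h) = 0.
  rewrite LC mulrCA.
  have -> : C * h = 1 + 'X^m * (K - b *: (C * 'X^(M - m))).
    have eXM : 'X^M = 'X^m * 'X^(M - m) :> {poly F} by rewrite -exprD subnKC.
    rewrite /h mulrBr hCA eXM.
    rewrite -!mul_polyC; ring.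
  rewrite mulrDr mulr1 coefD mulrCA coefXnM.
  have -> : (m.-1 < m)%N by rewrite prednK.
  rewrite addr0; apply/eqP; rewrite -/(nth 0 _ _) nth_default //.
  rewrite size_divp // hsh /=; move: hf hN m0; move=> hf' hN' m0'; apply: leq_trans (leq_sub2r M hf') _; clear -hN' m0'; lia.
rewrite add0r.
have hsm : (size (f %% h)%R <= size rs)%N by rewrite hszrs -ltnS -hsh ltn_modp.
rewrite {1}(lagrange hu_rs hsm) Lf_sum.
rewrite hszrs; apply: eq_bigr => s _.
rewrite LfZ; congr (_ * _).
have hz : root h rs`_s by rewrite hroot mem_nth // hszrs.
rewrite {2}(divp_eq f h) hornerD hornerM (eqP hz) mulr0 add0r.
done.
Qed.

End Closed.

Section SVcomp.
Variable F : closedFieldType.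
Variables (k : nat) (n d : 'I_k -> nat).
Hypothesis hd : forall i, (0 < d i)%N.

Local Notation D := (\sum_(i < k) d i)%N.

Lemma comp_rank_core (g : germ F n) (m : nat) (c : nat -> F) :
  (2 <= D)%N -> (0 < m)%N -> c m.-1 != 0 -> ppoint_ok (germ_pt g) ->
  Xrank_le (fun a : SVidx n d => \sum_(l < m) c l * sv_coef g l a) (m * (D - 1) + 2).
Proof.
move=> hD m0 cm hg.
pose gam : germ F n := fun i t => \poly_(e < m) (g i t)`_e.
pose P (a : SVidx n d) : {poly F} := \prod_(i < k) \prod_(t <- val (a i)) gam i t.
have hq : forall a, \sum_(l < m) c l * sv_coef g l a = Lf m c (P a).
  move=> a; rewrite /Lf; apply: eq_bigr => l _; congr (_ * _).
  rewrite /sv_coef; apply: congm_prod => //= i.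
  apply: congm_prod => t e he; by rewrite /gam coef_poly he.
have hsP : forall a, (size (P a) <= (D * m.-1).+1)%N.
  move=> a; apply: size_prod_bound => i _.
  apply: leq_trans (size_prod_bound (w := fun _ => 1%N) (e := m.-1) _ _) _.
    by move=> t _; rewrite mul1n prednK // size_poly.
  by rewrite sum1_size size_tuple.
pose tsel (i : 'I_k) : 'I_(n i).+1 := odflt ord0 [pick t | (g i t)`_0 != 0].
have htsel : forall i, (gam i (tsel i))`_0 != 0.
  move=> i; rewrite /gam coef_poly m0 /tsel.
  case: pickP => [t //|] /= H; have [t ht] := hg i.
  by move: (H t); rewrite /germ_pt in ht; rewrite ht.
pose Gam : {poly F} := \prod_(i < k) gam i (tsel i).
have hGam : Gam != 0.
  rewrite prodf_seq_neq0; apply/allP => i _ /=.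
  by apply: contra (htsel i) => /eqP ->; rewrite coef0.
pose M0 := ((D - 1) * m.-1).+1.
pose M := if M0%:R != 0 :> F then M0 else M0.+1.
have hM : M%:R != 0 :> F.
  rewrite /M; case: ifP => // /negbFE /eqP h.
  by rewrite -addn1 natrD h add0r oner_eq0.
have hMle : (M <= M0.+1)%N by rewrite /M; case: ifP.
have hMge : (M0 <= M)%N by rewrite /M; case: ifP.
have hmM : (m <= M)%N.
  apply: leq_trans hMge; rewrite /M0.
  move: m0 hD; case: (m) => // m1 _ /=; case: D => // [] // [] // D1 _.
  rewrite !subSS subn0; nia.
have hN : ((D * m.-1).+1 < M + m)%N.
  move: hMge; rewrite /M0.
  move: m0 hD; case: (m) => // m1 _ /=; case: D => // [] // [] // D1 _.
  rewrite !subSS subn0; nia.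
have [rs [hsz hu hz hrep]] := core_poly (N := (D * m.-1)%N) m0 cm hM hmM hN hGam.
exists M; split.
  apply: leq_trans hMle _; rewrite /M0.
  move: m0; case: (m) => // m1 _ /=; nia.
exists (fun l => fun i t => (gam i t).[rs`_l]); split.
  move=> l hl i; exists (tsel i).
  have : Gam.[rs`_l] != 0 by apply: hz; rewrite mem_nth // hsz.
  rewrite /Gam horner_prod prodf_seq_neq0 => /allP /(_ i (mem_index_enum _)) //.
exists (fun l => Lf m c (lag rs l)) => a.
rewrite hq hrep //; apply: eq_bigr => s _.
rewrite mulrC /sv /P horner_prod; congr (_ * _); apply: eq_bigr => i _.
by rewrite horner_prod.
Qed.

End SVcomp.

Section SVfinal.
Variable F : closedFieldType.
Variables (k : nat) (n d : 'I_k -> nat).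
Hypothesis hk : (0 < k)%N.
Hypothesis hd : forall i, (0 < d i)%N.

Local Notation D := (\sum_(i < k) d i)%N.

Lemma trim_coefs (m : nat) (c : nat -> F) : exists m', [/\ (m' <= m)%N,
  (m' = 0%N \/ (0 < m')%N /\ c m'.-1 != 0) & forall l, (m' <= l < m)%N -> c l = 0].
Proof.
elim: m => [|m [mm [h1 h2 h3]]]; first by exists 0%N; split; [done | left | move=> l; lia].
have [hc|hc] := eqVneq (c m) 0.
  exists mm; split => //; first by lia.
  move=> l /andP [hl1 hl2]; rewrite ltnS leq_eqVlt in hl2.
  case/orP: hl2 => [/eqP -> //|hl2]; apply: h3; by rewrite hl1.
exists m.+1; split => //; first by right.
move=> l; lia.
Qed.

Lemma comp_rank_D2 (g : germ F n) (m : nat) (c : nat -> F) :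
  (2 <= D)%N -> ppoint_ok (germ_pt g) ->
  Xrank_le (fun a : SVidx n d => \sum_(l < m) c l * sv_coef g l a) (m * (D - 1) + 2).
Proof.
move=> hD hg; have [m' [hm' hc hz]] := trim_coefs m c.
have e : forall a : SVidx n d, \sum_(l < m) c l * sv_coef g l a = \sum_(l < m') c l * sv_coef g l a.
  move=> a; rewrite (big_ord_widen _ (fun l => c l * sv_coef g l a) hm') [in RHS]big_mkcond /=.
  apply: eq_bigr => l _; case: ifP => // hl; rewrite hz ?mul0r //.
  by rewrite ltn_ord andbT leqNgt hl.
have -> : (fun a : SVidx n d => \sum_(l < m) c l * sv_coef g l a) =
          (fun a : SVidx n d => \sum_(l < m') c l * sv_coef g l a).
  by apply: functional_extensionality => a; apply: e.
case: hc => [->|[m0 cm]].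
  by apply: (Xrank_le_mono (r := 0%N)) => //; apply: Xrank_le0 => a; rewrite big_ord0.
apply: (Xrank_le_mono (r := (m' * (D - 1) + 2)%N)).
  by rewrite leq_add2r leq_mul2r hm' orbT.
exact: comp_rank_core.
Qed.

End SVfinal.

Section SVD1.
Variable F : closedFieldType.
Variables (k : nat) (n d : 'I_k -> nat).
Hypothesis hk : (0 < k)%N.
Hypothesis hd : forall i, (0 < d i)%N.

Local Notation D := (\sum_(i < k) d i)%N.

Lemma comp_rank_D1 (g : germ F n) (m : nat) (c : nat -> F) :
  D = 1%N ->
  Xrank_le (fun a : SVidx n d => \sum_(l < m) c l * sv_coef g l a) (m * (D - 1) + 2).
Proof.
move=> hD.
have hk1 : k = 1%N.
  have : (\sum_(i < k) 1 <= D)%N by apply: leq_sum => i _; exact: hd.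
  by rewrite sum1_card card_ord hD; lia.
pose i0 : 'I_k := Ordinal hk.
have all_i0 : forall j : 'I_k, j = i0.
  move=> j; apply: val_inj => /=; have := ltn_ord j; move: (nat_of_ord j) => jj; rewrite hk1; lia.
have hd1 : forall i, d i = 1%N.
  move=> i; have := hd i; have : (d i <= D)%N by rewrite (bigD1 i) //= leq_addr.
  rewrite hD; lia.
have key : forall a : SVidx n d, exists t0 : 'I_(n i0).+1,
    forall (R : comNzRingType) (f : forall i, 'I_(n i).+1 -> R),
      \prod_(i < k) \prod_(t <- val (a i)) f i t = f i0 t0.
  move=> a.
  have hs : size (val (a i0)) = 1%N by rewrite size_tuple hd1.
  case E: (tval (val (a i0))) hs => [|t0 [|]] // _.
  exists t0 => R f.
  rewrite (@big_pred1 _ _ _ _ i0 xpredT (fun i => \prod_(t <- val (a i)) f i t)); last first.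
    by move=> j; rewrite /= (all_i0 j) eqxx.
  by rewrite E big_seq1.
pose y : ppoint F n := fun i t => \sum_(l < m) c l * (g i t)`_l.
have hq : forall a : SVidx n d, \sum_(l < m) c l * sv_coef g l a = sv y a.
  move=> a; have [t0 ht0] := key a.
  rewrite /sv /sv_coef (ht0 F y) (ht0 _ g) /y.
  by [].
have -> : (fun a : SVidx n d => \sum_(l < m) c l * sv_coef g l a) = sv y.
  by apply: functional_extensionality => a; apply: hq.
have [/existsP [t ht]|hno] := boolP [exists t, y i0 t != 0].
  exists 1%N; split; first by rewrite hD subnn muln0.
  exists (fun _ => y); split.
    move=> l _ i; rewrite (all_i0 i); by exists t.
  by exists (fun _ => 1) => a; rewrite big_ord1 mul1r.
apply: (Xrank_le_mono (r := 0%N)) => //; apply: Xrank_le0 => a.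
have [t0 ht0] := key a; rewrite /sv ht0.
by move/existsPn: hno => /(_ t0) /negPn /eqP.
Qed.

End SVD1.

Unset Implicit Arguments.
Theorem theorem3 (F : closedFieldType) (k : nat) (n d : 'I_k -> nat)
  (hk : (0 < k)%N) (hd : forall i, (0 < d i)%N)
  (p : SVidx n d -> F) (hp : exists a, p a != 0)
  (alpha : nat) (m : 'I_alpha -> nat) (g : 'I_alpha -> germ F n)
  (c : nat) (hc : c = (\sum_(j < alpha) m j)%N)
  (hZ : curvilinear_scheme m g)
  (hpZ : in_span_scheme m g p)
  (hind : forall j : 'I_alpha, lin_indep (m j) (@sv_coef F k n d (g j))) :
  Xrank_le p (2 * alpha + c * ((\sum_(i < k) d i) - 1))%N.
Proof.
case: hpZ => cc hpe.
have hcomp : forall j : 'I_alpha, Xrank_le (fun a : SVidx n d => \sum_(l < m j) cc j l * sv_coef (g j) l a)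
    (m j * ((\sum_(i < k) d i) - 1) + 2)%N.
  move=> j.
  have hg : ppoint_ok (germ_pt (g j)) by case: hZ => /(_ j) [].
  have hD1 : (1 <= \sum_(i < k) d i)%N.
    apply: leq_trans (hd (Ordinal hk)) _; by rewrite (bigD1 (Ordinal hk)) //= leq_addr.
  case: (ltnP 1 (\sum_(i < k) d i)) => hD.
    exact: comp_rank_D2.
  apply: comp_rank_D1 => //; lia.
have := Xrank_le_sum (index_enum 'I_alpha) hcomp.
have -> : (fun a => \sum_(j <- index_enum 'I_alpha) \sum_(l < m j) cc j l * sv_coef (g j) l a) = p.
  by apply: functional_extensionality => a; rewrite hpe.
apply: Xrank_le_mono.
rewrite big_split /= -big_distrl /= -hc sum_nat_const card_ord addnC muln2 mul2n.
by [].
Qed.
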